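(* Let $(X, M, \ast)$ be a stationary fuzzy metric space (in the sense of George and Veeramani), and write $M(x,y)$ for the constant value of $M(x,y,t)$, $t>0$. Define $\hat{M}: X^2\times X^2\times(0,+\infty)\to[0,1]$ by $\hat{M}((x_1,x_2),(y_1,y_2),t)=\min\{M(x_1,y_1),M(x_2,y_2)\}$, so that $(X^2,\hat{M},\ast)$ is a fuzzy metric space. Then the function $X^2\to(0,1]$, $(x,y)\mapsto M(x,y)$, is $\mathbb{R}$-uniformly continuous with respect to $(X^2,\hat M,\ast)$; that is, for every $\varepsilon>0$ there exist $s>0$ and $\delta\in(0,1)$ such that for all $(x,z),(x',z')\in X^2$, $\hat{M}((x,z),(x',z'),s)>1-\delta$ implies $|M(x,z)-M(x',z')|<\varepsilon$.
   Context: A continuous $t$-norm $\ast$ is a continuous binary operation on $[0,1]$ that is associative, commutative, nondecreasing in each argument, and has $1$ as neutral element. A fuzzy metric space (George–Veeramani) is a triple $(X,M,\ast)$ where $X$ is a nonempty set, $\ast$ is a continuous $t$-norm, and $M: X\times X\times(0,+\infty)\to[0,1]$ satisfies, for all $x,y,z\in X$ and $s,t>0$: (GV1) $M(x,y,t)>0$; (GV2) $M(x,y,t)=1$ iff $x=y$; (GV3) $M(x,y,t)=M(y,x,t)$; (GV4) $M(x,y,t)\ast M(y,z,s)\le M(x,z,t+s)$; (GV5) $t\mapsto M(x,y,t)$ is continuous on $(0,+\infty)$. The fuzzy metric $M$ is stationary if for all $x,y\in X$ the function $t\mapsto M(x,y,t)$ is constant. A map $f:Y\to\mathbb{R}$ on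 a fuzzy metric space $(Y,N,\ast)$ is $\mathbb{R}$-uniformly continuous if for every $\varepsilon>0$ there exist $s>0$ and $\delta\in(0,1)$ such that $N(u,v,s)>1-\delta$ implies $|f(u)-f(v)|<\varepsilon$. *)

(* Defs.v *)
From Stdlib Require Import Reals.
Open Scope R_scope.

Definition is_cont_tnorm (T : R -> R -> R) : Prop :=
  (forall a b, 0 <= a <= 1 -> 0 <= b <= 1 -> 0 <= T a b <= 1) /\
  (forall a b c, 0 <= a <= 1 -> 0 <= b <= 1 -> 0 <= c <= 1 ->
       T a (T b c) = T (T a b) c) /\
  (forall a b, 0 <= a <= 1 -> 0 <= b <= 1 -> T a b = T b a) /\
  (forall a b c d, 0 <= a <= 1 -> 0 <= b <= 1 -> 0 <= c <= 1 -> 0 <= d <= 1 ->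
       a <= c -> b <= d -> T a b <= T c d) /\
  (forall a, 0 <= a <= 1 -> T a 1 = a) /\
  (forall a b, 0 <= a <= 1 -> 0 <= b <= 1 ->
     forall eps, eps > 0 -> exists d, d > 0 /\
       forall a' b', 0 <= a' <= 1 -> 0 <= b' <= 1 ->
         Rabs (a' - a) < d -> Rabs (b' - b) < d ->
         Rabs (T a' b' - T a b) < eps).

Definition is_GV_fuzzy_metric {X : Type} (M : X -> X -> R -> R) (T : R -> R -> R) : Prop :=
  (forall x y t, 0 < t -> 0 <= M x y t <= 1) /\
  (forall x y t, 0 < t -> M x y t > 0) /\
  (forall x y t, 0 < t -> (M x y t = 1 <-> x = y)) /\
  (forall x y t, 0 < t -> M x y t = M y x t) /\
  (forall x y z t s, 0 < t -> 0 < s -> T (M x y t) (M y z s) <= M x z (t + s)) /\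
  (forall x y t, 0 < t ->
     forall eps, eps > 0 -> exists d, d > 0 /\
       forall t', 0 < t' -> Rabs (t' - t) < d -> Rabs (M x y t' - M x y t) < eps).

Definition fuzzy_metric_space {X : Type} (M : X -> X -> R -> R) (T : R -> R -> R) : Prop :=
  is_cont_tnorm T /\ is_GV_fuzzy_metric M T.

Definition stationary {X : Type} (M : X -> X -> R -> R) : Prop :=
  forall x y t s, 0 < t -> 0 < s -> M x y t = M x y s.

Definition Mhat {X : Type} (M : X -> X -> R -> R) (p q : X * X) (t : R) : R :=
  Rmin (M (fst p) (fst q) t) (M (snd p) (snd q) t).

Definition R_uniformly_continuous {Y : Type} (N : Y -> Y -> R -> R) (f : Y -> R) : Prop :=
  forall eps, eps > 0 -> exists s delta, s > 0 /\ 0 < delta < 1 /\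
    forall u v, N u v s > 1 - delta -> Rabs (f u - f v) < eps.

(* Main.v *)
Require Import Defs.
From Stdlib Require Import Reals Lra Lia.
Open Scope R_scope.

Lemma tnorm_near1 (T : R -> R -> R) : is_cont_tnorm T ->
  forall eps, eps > 0 -> exists d, 0 < d < 1 /\
    forall a b, 0 <= a <= 1 -> 0 <= b <= 1 -> b > 1 - d -> T b a > a - eps.
Proof.
  intros [Hr [Ha [Hc [Hm [H1 Hct]]]]] eps He.
  destruct (archimed_cor1 (eps/2)) as [N [HN HN0]]; [lra|].
  assert (HNp : 0 < INR N) by (apply lt_0_INR; lia).
  assert (P : forall n, exists d, 0 < d < 1 /\ forall a b, 0 <= a <= 1 -> 0 <= b <= 1 ->
     b > 1 - d -> a <= INR n / INR N -> T b a > a - eps).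
  { induction n.
    - exists (1/2). split; [lra|]. intros a b Ha0 Hb0 Hb Hle.
      simpl in Hle. unfold Rdiv in Hle. rewrite Rmult_0_l in Hle.
      assert (a = 0) by lra. subst. destruct (Hr b 0 Hb0 Ha0). lra.
    - destruct IHn as [d1 [Hd1 IH]].
      set (c := INR n / INR N).
      assert (Hc0 : 0 <= c) by (unfold c; apply Rmult_le_pos; [apply pos_INR|left; apply Rinv_0_lt_compat; lra]).
      assert (HS : INR (S n) / INR N = c + / INR N).
      { unfold c. rewrite S_INR. field. lra. }
      destruct (Rle_dec c 1) as [Hc1|Hc1].
      + destruct (Hct 1 c ltac:(lra) ltac:(lra) (eps/2) ltac:(lra)) as [d2 [Hd2 C]].
        exists (Rmin d1 d2). split.
        { split; [apply Rmin_pos; lra| pose proof (Rmin_l d1 d2); lra]. }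
        intros a b Ha0 Hb0 Hb Hle.
        pose proof (Rmin_l d1 d2). pose proof (Rmin_r d1 d2).
        destruct (Rle_dec a c) as [Hac|Hac].
        * apply IH; auto; lra.
        * assert (Hmon : T b c <= T b a) by (apply Hm; lra).
          assert (Cb : Rabs (T b c - T 1 c) < eps/2).
          { apply C; try lra.
            - rewrite Rabs_left1; lra.
            - replace (c - c) with 0 by ring. rewrite Rabs_R0. lra. }
          assert (T1 : T 1 c = c) by (rewrite (Hc 1 c) by lra; apply H1; lra).
          rewrite T1 in Cb. apply Rabs_def2 in Cb. rewrite HS in Hle. lra.
      + exists d1. split; auto. intros a b Ha0 Hb0 Hb Hle. apply IH; auto. apply Rnot_le_lt in Hc1. unfold c in *. lra. }
  destruct (P N) as [d [Hd HP]]. exists d. split; auto.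
  intros a b Ha0 Hb0 Hb. apply HP; auto. unfold Rdiv. rewrite Rinv_r; lra.
Qed.

Theorem mainTheorem2 (X : Type) (M : X -> X -> R -> R) (T : R -> R -> R) :
  fuzzy_metric_space M T -> stationary M ->
  R_uniformly_continuous (Mhat M) (fun p : X * X => M (fst p) (snd p) 1).
Proof.
  intros [HT [Mr [Mp [Mid [Msym [Mtri Mc]]]]]] Hst eps He.
  pose proof HT as HT'.
  destruct HT' as [Tr [Ta [Tc [Tm [T1 Tct]]]]].
  destruct (tnorm_near1 T HT (eps/2) ltac:(lra)) as [d [Hd L]].
  exists 1, d. split; [lra|]. split; [auto|].
  intros [x z] [x' z'] Hu. unfold Mhat in Hu; simpl in *.
  assert (Hx : M x x' 1 > 1 - d) by (pose proof (Rmin_l (M x x' 1) (M z z' 1)); lra).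
  assert (Hz : M z z' 1 > 1 - d) by (pose proof (Rmin_r (M x x' 1) (M z z' 1)); lra).
  assert (tri : forall p q r, T (M p q 1) (M q r 1) <= M p r 1).
  { intros p q r.
    rewrite (Hst p q 1 (1/2)), (Hst q r 1 (1/2)), (Hst p r 1 (1/2 + 1/2)) by lra.
    apply Mtri; lra. }
  assert (R01 : forall p q, 0 <= M p q 1 <= 1) by (intros; apply Mr; lra).
  assert (side : forall a a' b b', M a a' 1 > 1 - d -> M b b' 1 > 1 - d ->
            M a b 1 > M a' b' 1 - eps).
  { intros a a' b b' Ha Hb.
    pose proof (tri a a' b') as t1. pose proof (tri a b' b) as t2.
    assert (l1 : T (M a a' 1) (M a' b' 1) > M a' b' 1 - eps/2) by (apply L; auto).
    rewrite (Msym b' b 1) in t2 by lra.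
    assert (l2 : T (M b b' 1) (M a b' 1) > M a b' 1 - eps/2) by (apply L; auto).
    rewrite Tc in l2 by auto. lra. }
  apply Rabs_def1.
  - assert (A := side x' x z' z).
    rewrite (Msym x' x), (Msym z' z) in A by lra. specialize (A Hx Hz). lra.
  - assert (A := side x x' z z' Hx Hz). lra.
Qed.
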